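(* Let $f(x)$ be a real polynomial of degree $3$ with three distinct real roots $x_1,x_2,x_3$, and let $k_1,k_2,k_3$ be the vertical lines $x=x_1$, $x=x_2$, $x=x_3$ in the coordinate plane. Then there exists an equilateral triangle $A_1A_2A_3$ with $A_i\in k_i$ for $i=1,2,3$. Moreover, for any such equilateral triangle, with inscribed circle $\omega$, the two vertical lines tangent to $\omega$ are exactly the lines $x=c$ where $c$ ranges over the two critical points (local extrema) of $f$, and the vertical line through the center of $\omega$ is the line $x=c_0$ where $c_0$ is the inflection point of $f$ (the root of $f''$).
   Context: Work in the real coordinate plane; ''vertical'' means parallel to the ordinate axis. *)

(* Defs.v *)
From HB Require Import structures.
From mathcomp Require Import all_boot all_order all_algebra.
Set Implicit Arguments. Unset Strict Implicit. Unset Printing Implicit Defensive.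
Import Order.TTheory GRing.Theory Num.Theory.
Local Open Scope ring_scope.

Definition point (R : rcfType) := (R * R)%type.

Definition dist (R : rcfType) (P Q : point R) : R :=
  Num.sqrt ((P.1 - Q.1) ^+ 2 + (P.2 - Q.2) ^+ 2).

Definition equilateral (R : rcfType) (A1 A2 A3 : point R) : Prop :=
  A1 <> A2 /\ dist A1 A2 = dist A2 A3 /\ dist A2 A3 = dist A3 A1.

Definition incenter (R : rcfType) (A1 A2 A3 : point R) : point R :=
  let a := dist A2 A3 in let b := dist A3 A1 in let c := dist A1 A2 in
  ((a * A1.1 + b * A2.1 + c * A3.1) / (a + b + c),
   (a * A1.2 + b * A2.2 + c * A3.2) / (a + b + c)).

(* inradius = 2 * area / perimeter *)
Definition inradius (R : rcfType) (A1 A2 A3 : point R) : R :=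
  let a := dist A2 A3 in let b := dist A3 A1 in let c := dist A1 A2 in
  `|(A2.1 - A1.1) * (A3.2 - A1.2) - (A3.1 - A1.1) * (A2.2 - A1.2)| / (a + b + c).

Definition on_circle (R : rcfType) (O : point R) (r : R) (P : point R) : Prop :=
  (P.1 - O.1) ^+ 2 + (P.2 - O.2) ^+ 2 = r ^+ 2.

Definition vertical_tangent (R : rcfType) (O : point R) (r : R) (t : R) : Prop :=
  exists! y : R, on_circle O r (t, y).

(* Main.v *)
Require Import Defs.
From HB Require Import structures.
From mathcomp Require Import all_boot all_order all_algebra.
From mathcomp Require Import ring lra.
Import Order.TTheory GRing.Theory Num.Theory.
Local Open Scope ring_scope.

Lemma size_deriv_le {R : rcfType} {p : {poly R}} {n} : (size p <= n)%N -> (size p^`() <= n)%N.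
Proof.
have [->|p0] := eqVneq p 0; first by rewrite deriv0 size_poly0.
move=> h; exact: leq_trans (ltnW (lt_size_deriv p0)) h.
Qed.

Lemma cubic_facts {R : rcfType} {f : {poly R}} {x1 x2 x3 : R} :
  size f = 4%N ->
  x1 != x2 -> x2 != x3 -> x1 != x3 ->
  root f x1 -> root f x2 -> root f x3 ->
  exists c : R, c != 0 /\
   (forall t, f^`().[t] = c * (3 * t^+2 - 2 * (x1+x2+x3) * t + (x1*x2+x2*x3+x1*x3))) /\
   (forall t, f^`(2).[t] = c * (6 * t - 2 * (x1+x2+x3))).
Proof.
move=> sf n12 n23 n13 r1 r2 r3.
have sf4 : (size f <= 4)%N by rewrite sf.
have sf' := size_deriv_le sf4.
have sf'' := size_deriv_le sf'.
have f4 : f`_4 = 0 by rewrite nth_default // sf.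
have f5 : f`_5 = 0 by rewrite nth_default // sf.
have ev : forall x, f.[x] = f`_0 + f`_1 * x + f`_2 * x^+2 + f`_3 * x^+3.
  by move=> x; rewrite (horner_coef_wide _ sf4) !big_ord_recr big_ord0; cbn [nat_of_ord widen_ord ord_max]; simpl; rewrite expr0 expr1 mulr1 add0r.
have ev' : forall x, f^`().[x] = f`_1 + f`_2 * 2 * x + f`_3 * 3 * x^+2.
  move=> x; rewrite (horner_coef_wide _ sf') !big_ord_recr big_ord0; cbn [nat_of_ord widen_ord ord_max]; rewrite !coef_deriv expr0 expr1 mulr1 f4 mul0rn mul0r; simpl.
  ring.
have ev'' : forall x, f^`(2).[x] = f`_2 * 2 + f`_3 * 6 * x.
  move=> x; rewrite derivnS derivn1.
  rewrite (horner_coef_wide _ (size_deriv_le sf')) !big_ord_recr big_ord0; cbn [nat_of_ord widen_ord ord_max]; rewrite !coef_deriv expr0 expr1 mulr1 f4 f5 !mul0rn !mul0r; simpl.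
  ring.
have c3 : f`_3 != 0.
  have : lead_coef f != 0 by rewrite lead_coef_eq0 -size_poly_eq0 sf.
  by rewrite lead_coefE sf.
move: r1 r2 r3; rewrite /root !ev => /eqP r1 /eqP r2 /eqP r3.
set c0 := f`_0 in r1 r2 r3 ev ev' ev''; set c1 := f`_1 in r1 r2 r3 ev ev' ev''.
set c2 := f`_2 in r1 r2 r3 ev ev' ev''; set c3' := f`_3 in r1 r2 r3 ev ev' ev'' c3.
have E12 : c1 + c2 * (x1 + x2) + c3' * (x1^+2 + x1*x2 + x2^+2) = 0.
  have : (x1 - x2) * (c1 + c2 * (x1 + x2) + c3' * (x1^+2 + x1*x2 + x2^+2)) = 0.
    by rewrite -[RHS](subrr 0) -{1}r1 -r2; ring.
  by move/eqP; rewrite mulf_eq0 subr_eq0 (negPf n12) /= => /eqP.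
have E13 : c1 + c2 * (x1 + x3) + c3' * (x1^+2 + x1*x3 + x3^+2) = 0.
  have : (x1 - x3) * (c1 + c2 * (x1 + x3) + c3' * (x1^+2 + x1*x3 + x3^+2)) = 0.
    by rewrite -[RHS](subrr 0) -{1}r1 -r3; ring.
  by move/eqP; rewrite mulf_eq0 subr_eq0 (negPf n13) /= => /eqP.
have E2 : c2 = - c3' * (x1 + x2 + x3).
  have : (x2 - x3) * (c2 + c3' * (x1 + x2 + x3)) = 0.
    by rewrite -[RHS](subrr 0) -{1}E12 -E13; ring.
  move/eqP; rewrite mulf_eq0 subr_eq0 (negPf n23) /= addr_eq0 => /eqP ->; ring.
have E1 : c1 = c3' * (x1*x2+x2*x3+x1*x3).
  apply/eqP; rewrite -subr_eq0; apply/eqP; rewrite -E12 E2; ring.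
exists c3'; split => //; split => t; [rewrite ev' E1 E2 | rewrite ev'' E2]; ring.
Qed.

Lemma core (R : rcfType) (p q u v L : R) : L != 0 ->
  p^+2 + q^+2 = L -> u^+2 + v^+2 = L -> (p - u)^+2 + (q - v)^+2 = L ->
  4 * (p^+2 - p * u + u^+2) = 3 * L /\ (p * v - u * q)^+2 * 4 = 3 * L^+2.
Proof.
move=> L0 h1 h2 h3.
have hD : 2 * (p * u + q * v) = L.
  have e : 2 * (p * u + q * v) = (p^+2 + q^+2) + (u^+2 + v^+2) - ((p - u)^+2 + (q - v)^+2) by ring.
  by rewrite e h1 h2 h3; ring.
split.
  have e : L * (4 * (p^+2 - p * u + u^+2) - 3 * L) = (L - 2 * (p * u))^+2 - 4 * (L - p^+2) * (L - u^+2) by ring.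
  have a1 : L - p^+2 = q^+2 by rewrite -h1; ring.
  have a2 : L - u^+2 = v^+2 by rewrite -h2; ring.
  have a3 : L - 2 * (p * u) = 2 * (q * v) by rewrite -hD; ring.
  rewrite a1 a2 a3 in e.
  have : L * (4 * (p^+2 - p * u + u^+2) - 3 * L) = 0 by rewrite e; ring.
  move/eqP; rewrite mulf_eq0 (negPf L0) /= subr_eq0 => /eqP //.
have e : (p * v - u * q)^+2 * 4 = 4 * ((p^+2 + q^+2) * (u^+2 + v^+2)) - (2 * (p * u + q * v))^+2 by ring.
by rewrite e h1 h2 hD; ring.
Qed.

Lemma vt_iff (R : rcfType) (O : point R) (r t : R) :
  vertical_tangent O r t <-> (t - O.1)^+2 = r^+2.
Proof.
rewrite /vertical_tangent /on_circle /=.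
split.
  case=> y [hy hu].
  have h2 : (t - O.1) ^+ 2 + ((2 * O.2 - y) - O.2) ^+ 2 = r ^+ 2 by rewrite -hy; ring.
  have := hu _ h2 => ey.
  have ey2 : y = O.2.
    apply/eqP; rewrite -subr_eq0; apply/eqP.
    have : 2 * (y - O.2) = 0.
      have -> : 2 * (y - O.2) = y - (2 * O.2 - y) by ring.
      by rewrite -ey subrr.
    by move/eqP; rewrite mulf_eq0 pnatr_eq0 /= => /eqP.
  by rewrite -hy ey2 subrr expr0n addr0.
move=> h; exists O.2; split; first by rewrite subrr expr0n addr0.
move=> y' hy'.
have : (y' - O.2)^+2 = 0 by move: hy'; rewrite h => /(congr1 (fun z => z - r^+2)); rewrite addrAC subrr add0r.
by move/eqP; rewrite sqrf_eq0 subr_eq0 => /eqP ->.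
Qed.

Theorem mainTheorem1 (R : rcfType) (f : {poly R}) (x1 x2 x3 : R) :
  size f = 4%N ->
  x1 != x2 -> x2 != x3 -> x1 != x3 ->
  root f x1 -> root f x2 -> root f x3 ->
  (exists A1 A2 A3 : point R,
      equilateral A1 A2 A3 /\ A1.1 = x1 /\ A2.1 = x2 /\ A3.1 = x3) /\
  (forall A1 A2 A3 : point R,
      equilateral A1 A2 A3 -> A1.1 = x1 -> A2.1 = x2 -> A3.1 = x3 ->
      (forall t : R,
          vertical_tangent (incenter A1 A2 A3) (inradius A1 A2 A3) t
          <-> root f^`() t) /\
      root f^`(2) (incenter A1 A2 A3).1).
Proof.
move=> sf n12 n23 n13 r1 r2 r3.
have [c [c0 [hf' hf'']]] := cubic_facts (R := R) (f := f) sf n12 n23 n13 r1 r2 r3.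
split.
  set s := Num.sqrt (3:R).
  have hs : s^+2 = 3 by rewrite sqr_sqrtr // ler0n.
  exists (x1, 0), (x2, s * ((x2 - x1) - 2 * (x3 - x1)) / 3),
    (x3, s * (2 * (x2 - x1) - (x3 - x1)) / 3).
  split; last by [].
  split; first by case=> e _; rewrite e eqxx in n12.
  rewrite /dist /=; split; congr (Num.sqrt _); apply/eqP; rewrite -subr_eq0.
    set D := (X in X == 0).
    have -> : D = (s^+2 - 3) * (- (2 * (x2 - x1) * (x3 - x1) - (x3 - x1)^+2) / 3).
 by rewrite /D; field.
    by rewrite hs subrr mul0r.
  set D := (X in X == 0).
  have -> : D = (s^+2 - 3) * (- ((x2 - x1)^+2 - 2 * (x2 - x1) * (x3 - x1)) / 3) by rewrite /D; field.
  by rewrite hs subrr mul0r.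
move=> [a1 b1] [a2 b2] [a3 b3] [neq [e1 e2]] h1 h2 h3.
simpl in h1, h2, h3; subst a1 a2 a3.
set L := dist (x1, b1) (x2, b2).
have R12pos : 0 < (x1 - x2)^+2 + (b1 - b2)^+2.
  have hx : 0 < (x1 - x2)^+2 by rewrite exprn_even_gt0 //= subr_eq0.
  have hy : 0 <= (b1 - b2)^+2 by exact: sqr_ge0.
  exact: ltr_wpDr hy hx.
have hL : L^+2 = (x1 - x2)^+2 + (b1 - b2)^+2 by rewrite /L /dist /= sqr_sqrtr // ltW.
have Lpos : 0 < L by rewrite /L /dist /= sqrtr_gt0.
have L0 : L != 0 by rewrite gt_eqF.
have hL23 : L^+2 = (x2 - x3)^+2 + (b2 - b3)^+2.
  by rewrite /L e1 /dist /= sqr_sqrtr // addr_ge0 // sqr_ge0.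
have hL31 : L^+2 = (x3 - x1)^+2 + (b3 - b1)^+2.
  by rewrite /L e1 e2 /dist /= sqr_sqrtr // addr_ge0 // sqr_ge0.
have g1 : (x2 - x1)^+2 + (b2 - b1)^+2 = L^+2 by rewrite hL; ring.
have g2 : (x3 - x1)^+2 + (b3 - b1)^+2 = L^+2 by rewrite hL31; ring.
have g3 : ((x2 - x1) - (x3 - x1))^+2 + ((b2 - b1) - (b3 - b1))^+2 = L^+2 by rewrite hL23; ring.
have [k1 k2] := @core R _ _ _ _ _ (expf_neq0 2 L0) g1 g2 g3.
have k2' : ((x2 - x1) * (b3 - b1) - (x3 - x1) * (b2 - b1))^+2 = 3 * (L^+2)^+2 / 4.
  by rewrite -k2; field.
have hcx : (incenter (x1, b1) (x2, b2) (x3, b3)).1 = (x1 + x2 + x3) / 3.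
  rewrite /incenter /= -e2 -e1 -/L; field.
  by rewrite gt_eqF // !addr_gt0.
have hr : (inradius (x1, b1) (x2, b2) (x3, b3))^+2 = L^+2 / 12.
  rewrite /inradius /= -e2 -e1 -/L expr_div_n real_normK ?num_real // k2'.
  field.
  by rewrite gt_eqF // !addr_gt0.
split; last first.
  by rewrite /root hcx hf''; apply/eqP; field.
move=> t; rewrite vt_iff hcx hr /root hf'.
have hL12 : L^+2 / 12 = ((x2 - x1)^+2 - (x2 - x1) * (x3 - x1) + (x3 - x1)^+2) / 9.
  have -> : L^+2 = 4 * ((x2 - x1)^+2 - (x2 - x1) * (x3 - x1) + (x3 - x1)^+2) / 3 by rewrite k1; field.
  by field.
rewrite hL12 mulf_eq0 (negPf c0) /=; split.
  move=> h; apply/eqP.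
  set Q := (X in X = 0).
  have -> : Q = 3 * ((t - (x1 + x2 + x3) / 3) ^+ 2 - ((x2 - x1)^+2 - (x2 - x1) * (x3 - x1) + (x3 - x1)^+2) / 9) by rewrite /Q; field.
  by rewrite h subrr mulr0.
move/eqP=> hQ; apply/eqP; rewrite -subr_eq0; apply/eqP.
set D := (X in X = 0).
have -> : D = (3 * t ^+ 2 - 2 * (x1 + x2 + x3) * t + (x1 * x2 + x2 * x3 + x1 * x3)) / 3 by rewrite /D; field.
by rewrite hQ mul0r.
Qed.
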